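(* Let $d\ge1$ and let $(\boldsymbol X_1,Y_1)=(X_{1,1},\ldots,X_{1,d},Y_1)$ be a random vector with continuous marginals and $(d+1)$-dimensional copula $C_1$. Fix $\boldsymbol\alpha\in[0,1)^d$ with $C_1(\boldsymbol\alpha,1)<1$. If $C_1$ is $\mathrm{LTD}^1_{d+1}$, then for all $\beta\in(0,1)$, $$\mathrm{VaR}_\beta(Y_1)\le\mathrm{VCoVaR}_{\boldsymbol\alpha,\beta}(Y_1|\boldsymbol X_1)\quad\text{and}\quad \mathrm{ES}_\beta(Y_1)\le\mathrm{VCoES}_{\boldsymbol\alpha,\beta}(Y_1|\boldsymbol X_1).$$
   Context: $C(\boldsymbol{\alpha},v)=C(\alpha_1,\ldots,\alpha_d,v)$. $F^{-1}(t)=\inf\{x:F(x)\ge t\}$, $\mathrm{VaR}_t(Z)=F_Z^{-1}(t)$, $\mathrm{ES}_\beta(Z)=\frac1{1-\beta}\int_\beta^1\mathrm{VaR}_t(Z)\,dt$. $\mathrm{VCoVaR}_{\boldsymbol\alpha,t}(Y_1|\boldsymbol X_1)$ is the $t$-quantile of the conditional distribution of $Y_1$ given $\{\exists\, i: X_{1,i}>\mathrm{VaR}_{\alpha_i}(X_{1,i})\}$; $\mathrm{VCoES}_{\boldsymbol\alpha,\beta}(Y_1|\boldsymbol X_1)=\frac1{1-\beta}\int_\beta^1\mathrm{VCoVaR}_{\boldsymbol\alpha,t}(Y_1|\boldsymbol X_1)\,dt$. A $(d+1)$-dimensional copula $C$ is $\mathrm{LTD}^1_{d+1}$ if $C(u_1,\ldots,u_d,v)/v$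 is nonincreasing in $v\in(0,1]$ for all $u_1,\ldots,u_d$ (equivalently, for $(U_1,\ldots,U_d,V)\sim C$, $P(U_1\le u_1,\ldots,U_d\le u_d\mid V\le v)$ is nonincreasing in $v$). *)

(* Defs.v *)
From HB Require Import structures.
From mathcomp Require Import all_boot all_order all_algebra.
From mathcomp Require Import all_classical all_reals all_analysis.
Set Implicit Arguments. Unset Strict Implicit. Unset Printing Implicit Defensive.
Import Order.TTheory GRing.Theory Num.Theory.
Local Open Scope classical_set_scope.
Local Open Scope ring_scope.

(* (n+1)-dimensional copula written as C(u_1,...,u_n, v), u : 'I_n -> R. *)
Definition in01 (R : realType) (x : R) := 0 <= x <= 1.

Definition copula (R : realType) (n : nat) (C : ('I_n -> R) -> R -> R) : Prop :=
  (forall u v, (forall i, in01 (u i)) -> in01 v ->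
     ((exists i, u i = 0) \/ v = 0) -> C u v = 0) /\
  (forall v, in01 v -> C (fun _ => 1) v = v) /\
  (forall j x, in01 x -> C (fun i => if i == j then x else 1) 1 = x) /\
  (* (n+1)-increasing: every C-volume of a box in [0,1]^(n+1) is nonnegative *)
  (forall (a b : 'I_n -> R) (av bv : R),
     (forall i, 0 <= a i /\ a i <= b i /\ b i <= 1) ->
     0 <= av -> av <= bv -> bv <= 1 ->
     0 <= \sum_(s : {ffun 'I_n -> bool}) \sum_(e : bool)
            (-1) ^+ (#|[set i | ~~ s i]| + (~~ e))%N *
            C (fun i => if s i then b i else a i) (if e then bv else av)).

Definition LTD1 (R : realType) (n : nat) (C : ('I_n -> R) -> R -> R) : Prop :=
  forall u v1 v2, (forall i, in01 (u i)) -> 0 < v1 -> v1 <= v2 -> v2 <= 1 ->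
    C u v2 / v2 <= C u v1 / v1.

Section risk.
Context {d : measure_display} {T : measurableType d} {R : realType}
  (P : probability T R).
Local Open Scope ereal_scope.

Definition VaR (Z : {RV P >-> R}) (t : R) : \bar R :=
  ereal_inf [set x%:E | x in [set x : R | t%:E <= cdf Z x]].

Definition ES (Z : {RV P >-> R}) (beta : R) : \bar R :=
  ((1 - beta)^-1)%:E *
  \int[lebesgue_measure]_(t in `[beta, 1%R]%classic) VaR Z t.

Definition stress_event (n : nat) (X : 'I_n -> {RV P >-> R}) (alpha : 'I_n -> R)
  : set T := [set w | exists i, VaR (X i) (alpha i) < (X i w)%:E].

Definition cond_cdf (n : nat) (X : 'I_n -> {RV P >-> R}) (alpha : 'I_n -> R)
  (Y : {RV P >-> R}) (y : R) : R :=
  (fine (P (stress_event X alpha `&` [set w | Y w <= y])) /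
   fine (P (stress_event X alpha)))%R.

Definition VCoVaR (n : nat) (X : 'I_n -> {RV P >-> R}) (alpha : 'I_n -> R)
  (Y : {RV P >-> R}) (t : R) : \bar R :=
  ereal_inf [set y%:E | y in [set y : R | (t <= cond_cdf X alpha Y y)%R]].

Definition VCoES (n : nat) (X : 'I_n -> {RV P >-> R}) (alpha : 'I_n -> R)
  (Y : {RV P >-> R}) (beta : R) : \bar R :=
  ((1 - beta)^-1)%:E *
  \int[lebesgue_measure]_(t in `[beta, 1%R]%classic) VCoVaR X alpha Y t.

End risk.

(* Main.v *)
Require Import Defs.
From HB Require Import structures.
From mathcomp Require Import all_boot all_order all_algebra.
From mathcomp Require Import all_classical all_reals all_analysis.
From mathcomp Require Import lra.
Import Order.TTheory GRing.Theory Num.Theory numFieldTopology.Exports numFieldNormedType.Exports.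
Local Open Scope classical_set_scope.
Local Open Scope ring_scope.

Lemma int_mono (d : measure_display) (T : measurableType d) (R : realType)
  (mu : {measure set T -> \bar R}) (D : set T) (f g : T -> \bar R) :
  (forall x, (f x <= g x)%E) ->
  (\int[mu]_(x in D) f x <= \int[mu]_(x in D) g x)%E.
Proof.
move=> fg; rewrite /integral; apply: leeB.
  apply: ereal_sup_le => _ [h hh <-]; exists h => //= x.
  apply: le_trans (hh x) _.
  have := @funepos_le _ R setT (f \_ D) (g \_ D).
  apply => //; [move=> z _; exact: lee_restrict | exact: in_setT].
apply: ereal_sup_le => _ [h hh <-]; exists h => //= x.
apply: le_trans (hh x) _.
have := @funeneg_le _ R setT (f \_ D) (g \_ D).
apply => //; [move=> z _; exact: lee_restrict | exact: in_setT].
Qed.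

Section key.
Context (d : measure_display) (T : measurableType d) (R : realType) (P : probability T R).

Lemma cdfE (Z : {RV P >-> R}) z : cdf Z z = P [set w | Z w <= z].
Proof.
rewrite /cdf /distribution /pushforward; congr (P _).
Qed.

Lemma mle (Z : {RV P >-> R}) z : measurable [set w | Z w <= z].
Proof.
have -> : [set w | Z w <= z] = Z @^-1` `]-oo, z].
  by apply/seteqP; split => w /=; rewrite in_itv.
exact: measurable_funPTI.
Qed.

Lemma finP (A : set T) : measurable A -> P A \is a fin_num.
Proof. exact: fin_num_measure. Qed.

Lemma fineP_ge0 (A : set T) : 0 <= fine (P A).
Proof. by apply: fine_ge0. Qed.

Lemma fineP_le1 (A : set T) : measurable A -> fine (P A) <= 1.
Proof. by move=> mA; rewrite -lee_fin fineK ?finP // probability_le1. Qed.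

Lemma cdf_large (Z : {RV P >-> R}) (y e : R) : 0 < e ->
  exists t, y <= t /\ 1 - e < fine (cdf Z t).
Proof.
move=> e0.
have /fine_cvgP[_ h] := cvg_cdfy1 Z.
have h2 : forall z, z < 1 -> \forall t \near +oo%R, z < fine (cdf Z t).
  move=> z z1; have := @cvgr_gt R _ _ _ _ _ h z z1.
  by move=> H; apply: H; exact: _.
have : \forall t \near +oo%R, y <= t /\ 1 - e < fine (cdf Z t).
  near=> t; split; last by near: t; apply: h2; rewrite ltrBlDr ltrDl.
  near: t; apply: nbhs_pinfty_ge; exact: num_real.
by move/filter_ex.
Unshelve. all: by end_near.
Qed.


Lemma fin_cdf (Z : {RV P >-> R}) z : cdf Z z \is a fin_num.
Proof. by rewrite cdfE; apply: finP; exact: mle. Qed.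

Lemma VaR_fin_or (Z : {RV P >-> R}) a : a < 1 ->
  VaR Z a = -oo%E \/ VaR Z a \is a fin_num.
Proof.
move=> a1; have [t [_ ht]] : exists t, 0 <= t /\ 1 - (1 - a) < fine (cdf Z t).
  by apply: cdf_large; rewrite subr_gt0.
have lt : (VaR Z a < +oo)%E.
  apply: (@le_lt_trans _ _ t%:E); last exact: ltry.
  apply: ereal_inf_lbound; exists t => //=.
  rewrite -(fineK (fin_cdf Z t)) lee_fin; apply: ltW.
  by move: ht; rewrite opprB addrCA subrr addr0.
case: (VaR Z a) lt => [r| |] //= _; by [right | left].
Qed.


Lemma key n (X : 'I_n -> {RV P >-> R}) (Y : {RV P >-> R})
  (C : ('I_n -> R) -> R -> R) (alpha : 'I_n -> R) :
  (forall (x : 'I_n -> R) (y : R),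
     fine (P ([set w | forall i, X i w <= x i] `&` [set w | Y w <= y])) =
     C (fun i => fine (cdf (X i) (x i))) (fine (cdf Y y))) ->
  (forall i, alpha i < 1) -> LTD1 C ->
  forall y, cond_cdf X alpha Y y <= fine (cdf Y y).
Proof.
move=> hC ha hL y; rewrite /cond_cdf.
set S := stress_event X alpha.
have [[i hi]|nNy] := pselect (exists i, VaR (X i) (alpha i) = -oo%E).
  have -> : S = setT.
    apply/seteqP; split => // w _; exists i; rewrite hi; exact: ltNyr.
  by rewrite setTI probability_setT /= divr1 cdfE.
have fin : forall i, VaR (X i) (alpha i) \is a fin_num.
  move=> i; case: (@VaR_fin_or (X i) _ (ha i)) => // h.
  by exfalso; apply: nNy; exists i.
pose q i := fine (VaR (X i) (alpha i)).
set B := [set w | forall i, X i w <= q i].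
have mB : measurable B.
  have -> : B = \bigcap_(i in setT) [set w | X i w <= q i].
    by apply/seteqP; split => w /= h i; [move=> _; exact: h | exact: h].
  apply: fin_bigcap_measurable; last by move=> i _; exact: mle.
  exact: finite_finset.
have SE : S = ~` B.
  apply/seteqP; split => w /=.
  - move=> [i hi] hB; have := hB i; rewrite -lee_fin /q fineK //.
    by move=> /le_lt_trans /(_ hi); rewrite ltxx.
  - move=> nB; apply: contrapT => nS; apply: nB => i.
    rewrite -lee_fin /q fineK // leNgt; apply/negP => hi; apply: nS; by exists i.
pose u i := fine (cdf (X i) (q i)).
have hu : forall i, in01 (u i).
  by move=> i; rewrite /u cdfE; apply/andP; split; [exact: fineP_ge0 | apply: fineP_le1; exact: mle].
pose At t := [set w | Y w <= t].
have hCy : forall t, fine (P (B `&` At t)) = C u (fine (cdf Y t)) := fun t => hC q t.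
have mA : forall t, measurable (At t) := fun t => mle Y t.
have decB : forall t, fine (P B) = fine (P (B `\` At t)) + fine (P (B `&` At t)).
  move=> t; rewrite (measureDI _ mB (mA t)) fineD //; apply: finP.
    exact: measurableD.
  exact: measurableI.
have decA : fine (P (At y)) = fine (P (At y `\` B)) + fine (P (At y `&` B)).
  rewrite (measureDI _ (mA y) mB) fineD //; apply: finP.
    exact: measurableD.
  exact: measurableI.
have eS : fine (P S) = 1 - fine (P B).
  by rewrite SE probability_setC // fineB //; apply: finP.
have eSA : S `&` At y = At y `\` B by rewrite SE setIC setDE.
rewrite -/(At y) eSA eS cdfE -/(At y).
set v := fine (P (At y)).
set c := fine (P (At y `&` B)).
set pB := fine (P B).
have cE : c = C u v by rewrite /c setIC hCy /v cdfE.
have c0 : 0 <= c by exact: fineP_ge0.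
have v0 : 0 <= v by exact: fineP_ge0.
have pB1 : pB <= 1 by apply: fineP_le1.
have key : v * pB <= c.
  have [v00|vpos] := eqVneq v 0; first by rewrite v00 mul0r.
  have vgt0 : 0 < v by rewrite lt_neqAle eq_sym vpos v0.
  suff : pB <= c / v.
    by move=> h; rewrite -(ler_pM2l vgt0) in h; rewrite (le_trans h) // mulrC divfK.
  apply/ler_addgt0Pr => e e0.
  have [t [yt ht]] := @cdf_large Y y e e0.
  set v' := fine (cdf Y t) in ht.
  have vv' : v <= v'.
    rewrite /v /v' -cdfE; apply: fine_le; [exact: fin_cdf | exact: fin_cdf |].
    exact: cdf_nondecreasing.
  have v'1 : v' <= 1 by rewrite /v' cdfE; apply: fineP_le1; exact: mle.
  have v'0 : 0 < v' by exact: lt_le_trans vgt0 vv'.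
  have hl := hL u v v' hu vgt0 vv' v'1.
  rewrite -cE -hCy in hl.
  set c' := fine (P (B `&` At t)) in hl.
  have c'0 : 0 <= c' by exact: fineP_ge0.
  have c'le : c' <= c' / v'.
    by rewrite ler_pdivlMr //; nra.
  have d1 : fine (P (B `\` At t)) <= 1 - v'.
    have e1 : fine (P (~` At t)) = 1 - v'.
      by rewrite probability_setC // fineB //= ?finP // /v' cdfE.
    rewrite -e1.
    apply: fine_le; [apply: finP; exact: measurableD | apply: finP; exact: measurableC |].
    apply: le_measure; rewrite ?inE; [exact: measurableD | exact: measurableC |].
    by move=> w [].
  rewrite /pB (decB t).
  have : 1 - v' < e by rewrite ltrBlDr addrC -ltrBlDr.
  move: (le_trans c'le hl); move=> H1 H2; rewrite -/c'; lra.
rewrite -/v.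
have [pB1e|pBne] := eqVneq (1 - pB) 0.
  by rewrite pB1e invr0 mulr0.
have pBgt : 0 < 1 - pB by rewrite lt_neqAle eq_sym pBne subr_ge0 pB1.
rewrite ler_pdivrMr //.
have : fine (P (At y `\` B)) = v - c by rewrite /v decA -/c addrK.
move=> ->; nra.
Qed.

End key.

Theorem corollary4p4 (d : measure_display) (T : measurableType d)
  (R : realType) (P : probability T R) (n : nat) (hn : (0 < n)%N)
  (X : 'I_n -> {RV P >-> R}) (Y : {RV P >-> R})
  (C : ('I_n -> R) -> R -> R) (alpha : 'I_n -> R) :
  (* continuous marginals *)
  (forall i, continuous (fun x : R => fine (cdf (X i) x))) ->
  continuous (fun y : R => fine (cdf Y y)) ->
  (* C is a copula of (X_1, ..., X_n, Y) *)
  copula C ->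
  (forall (x : 'I_n -> R) (y : R),
     fine (P ([set w | forall i, X i w <= x i] `&` [set w | Y w <= y])) =
     C (fun i => fine (cdf (X i) (x i))) (fine (cdf Y y))) ->
  (forall i, 0 <= alpha i < 1) ->
  C alpha 1 < 1 ->
  LTD1 C ->
  forall beta : R, 0 < beta < 1 ->
    (VaR Y beta <= VCoVaR X alpha Y beta)%E /\
    (ES Y beta <= VCoES X alpha Y beta)%E.
Proof.
move=> _ _ _ hC ha _ hL beta /andP[b0 b1].
have ha1 : forall i, alpha i < 1 by move=> i; case/andP: (ha i).
have K := @key _ _ _ P n X Y C alpha hC ha1 hL.
have pw : forall t, (VaR Y t <= VCoVaR X alpha Y t)%E.
  move=> t; apply: ereal_inf_le_tmp => _ [x hx <-]; exists x => //=.
  rewrite -(fineK (@fin_cdf _ _ _ P Y x)) lee_fin; exact: le_trans hx (K x).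
split; first exact: pw.
rewrite /ES /VCoES; apply: lee_wpmul2l.
  by rewrite lee_fin invr_ge0 subr_ge0 ltW.
by apply: int_mono => t; exact: pw.
Qed.
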